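(* Let $M$ be a matroid on $E$ whose dual is transversal with presentation $\mathcal A=(A_1,\ldots,A_r)$, $r=r^*(M)$, and let $e\in E$. Let $X\subseteq E-e$. Then $$r_{M\backslash e}(X)\le |X|-|\mathcal A(X)|-\max\{|\mathcal A_e(X\cup\{e\})|-1,\,0\},$$ with equality if $X$ is a cyclic flat of $M\backslash e$.
   Context: $M^*=M[\mathcal A]$, the transversal matroid whose independent sets are the partial transversals of $\mathcal A$; $r^*(M)$ is the rank of $M^*$. For $Y\subseteq E$: $\mathcal A(Y)=\{i\in[r]:A_i\subseteq Y\}$ and $\mathcal A_e(Y)=\{i\in\mathcal A(Y): e\in A_i\}$. A cyclic flat is a flat that is a union of circuits. *)

(* Defs.v *)
From mathcomp Require Import all_boot all_order.
Set Implicit Arguments. Unset Strict Implicit. Unset Printing Implicit Defensive.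

Section Matroids.
Variable T : finType.

Definition matroid_axioms (E : {set T}) (ind : {set T} -> bool) : Prop :=
  [/\ ind set0,
      (forall I : {set T}, ind I -> I \subset E),
      (forall I J : {set T}, J \subset I -> ind I -> ind J)
    & (forall I J : {set T}, ind I -> ind J -> #|I| < #|J| ->
         exists2 x, x \in J :\: I & ind (x |: I))].

Definition mrank (ind : {set T} -> bool) (X : {set T}) : nat :=
  \max_(I : {set T} | (I \subset X) && ind I) #|I|.

Definition mbasis (E : {set T}) (ind : {set T} -> bool) (B : {set T}) : bool :=
  ind B && [forall x in E :\: B, ~~ ind (x |: B)].

Definition dual_indep (E : {set T}) (ind : {set T} -> bool) (I : {set T}) : bool :=
  (I \subset E) && [exists B : {set T}, mbasis E ind B && [disjoint I & B]].

Definition del_indep (ind : {set T} -> bool) (e : T) (I : {set T}) : bool :=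
  ind I && (e \notin I).

Definition mcircuit (E : {set T}) (ind : {set T} -> bool) (C : {set T}) : Prop :=
  [/\ C \subset E, ~~ ind C & forall x, x \in C -> ind (C :\ x)].

Definition mflat (E : {set T}) (ind : {set T} -> bool) (X : {set T}) : Prop :=
  X \subset E /\ forall y, y \in E :\: X -> mrank ind X < mrank ind (y |: X).

Definition mcyclic (E : {set T}) (ind : {set T} -> bool) (X : {set T}) : Prop :=
  forall x, x \in X -> exists C, [/\ mcircuit E ind C, x \in C & C \subset X].

Definition cyclic_flat (E : {set T}) (ind : {set T} -> bool) (X : {set T}) : Prop :=
  mflat E ind X /\ mcyclic E ind X.

Definition partial_transversal (r : nat) (A : 'I_r -> {set T}) (I : {set T}) : Prop :=
  exists f : T -> 'I_r, {in I &, injective f} /\ (forall x, x \in I -> x \in A (f x)).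

(* A(Y) = { i : A_i ⊆ Y } and A_e(Y) = { i ∈ A(Y) : e ∈ A_i } *)
Definition famA (r : nat) (A : 'I_r -> {set T}) (Y : {set T}) : {set 'I_r} :=
  [set i | A i \subset Y].
Definition famAe (r : nat) (A : 'I_r -> {set T}) (e : T) (Y : {set T}) : {set 'I_r} :=
  [set i | (A i \subset Y) && (e \in A i)].

End Matroids.

(* Main.v *)
Require Import Defs.
From mathcomp Require Import all_boot all_order.
From mathcomp Require Import zify.
Set Implicit Arguments. Unset Strict Implicit. Unset Printing Implicit Defensive.

Section Proofs.
Variable T : finType.
Variable E : {set T}.
Variable ind : {set T} -> bool.
Hypothesis Hm : matroid_axioms E ind.

Lemma ind0 : ind set0. Proof. by case: Hm. Qed.
Lemma indE (I : {set T}) : ind I -> I \subset E. Proof. by case: Hm => _ H _ _; apply: H. Qed.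
Lemma indS (I J : {set T}) : J \subset I -> ind I -> ind J. Proof. by case: Hm => _ _ H _; apply: H. Qed.
Lemma indX (I J : {set T}) : ind I -> ind J -> #|I| < #|J| -> exists2 x, x \in J :\: I & ind (x |: I).
Proof. by case: Hm => _ _ _ H; apply: H. Qed.

Lemma mrank_ge (P : {set T} -> bool) (X I : {set T}) : I \subset X -> P I -> #|I| <= mrank P X.
Proof.
move=> s p; rewrite /mrank.
by apply: (@leq_bigmax_cond _ (fun I : {set T} => (I \subset X) && P I) (fun I : {set T} => #|I|) I); rewrite s.
Qed.

Lemma mrank_wit (P : {set T} -> bool) (X : {set T}) : P set0 -> exists I : {set T}, [/\ I \subset X, P I & #|I| = mrank P X].
Proof.
move=> P0; rewrite /mrank.
have h0 : (set0 \subset X) && P set0 by rewrite sub0set P0.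
rewrite (@bigmax_eq_arg _ set0 (fun I : {set T} => (I \subset X) && P I) (fun I : {set T} => #|I|) h0).
by case: arg_maxnP => // I /andP[s p] _; exists I.
Qed.

Lemma ext_basis (I : {set T}) : ind I -> exists2 B, mbasis E ind B & I \subset B.
Proof.
move=> iI.
have h0 : (I \subset I) && ind I by rewrite subxx iI.
case: (@arg_maxnP _ I (fun B : {set T} => (I \subset B) && ind B) (fun B : {set T} => #|B|) h0) => B /andP[sIB iB] mx.
exists B => //; rewrite /mbasis iB /=; apply/forall_inP => x /setDP[xE xB]; apply/negP => ix.
have := mx (x |: B); rewrite ix (subset_trans sIB (subsetUr _ _)) => /(_ isT).
by rewrite cardsU1 xB; lia.
Qed.

Lemma basis_card (B1 B2 : {set T}) : mbasis E ind B1 -> mbasis E ind B2 -> #|B1| <= #|B2|.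
Proof.
move=> /andP[i1 _] /andP[i2 /forall_inP m2].
rewrite leqNgt; apply/negP => lt.
case: (indX i2 i1 lt) => x /setDP[x1 x2] ix.
have xE : x \in E by apply: (subsetP (indE i1)).
by have := m2 x; rewrite !inE x2 xE ix => /(_ isT).
Qed.

Variable r : nat.
Variable A : 'I_r -> {set T}.
Hypothesis HA : forall i, A i \subset E.
Hypothesis Hd : forall I, dual_indep E ind I <-> partial_transversal A I.
Hypothesis Hr : r = mrank (dual_indep E ind) E.

Lemma dual_basis (B : {set T}) : mbasis E ind B -> dual_indep E ind (E :\: B).
Proof.
move=> bB; rewrite /dual_indep subsetDl; apply/existsP; exists B.
by rewrite bB /= disjoints_subset setDE subsetIr.
Qed.

Lemma card_cobasis (B : {set T}) : mbasis E ind B -> #|E :\: B| = r.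
Proof.
move=> bB; apply/eqP; rewrite eqn_leq; apply/andP; split.
  by rewrite Hr; apply: mrank_ge; [exact: subsetDl | exact: dual_basis].
rewrite Hr /mrank; apply/bigmax_leqP => J /andP[sJ /andP[_ /existsP[B0 /andP[bB0 dj]]]].
have sJ' : J \subset E :\: B0.
  apply/subsetP => x xJ; rewrite inE (subsetP sJ) // andbT; apply/negP => xB0.
  by move: dj; rewrite disjoints_subset => /subsetP/(_ x xJ); rewrite inE xB0.
apply: (leq_trans (subset_leq_card sJ')).
have e1 := basis_card bB bB0.
move: (bB) (bB0) => /andP[iB _] /andP[iB0 _].
rewrite !cardsD (setIidPr (indE iB)) (setIidPr (indE iB0)).
by apply: leq_sub2l.
Qed.

Lemma PT_sub (S S' : {set T}) : S' \subset S -> partial_transversal A S -> partial_transversal A S'.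
Proof.
move=> s [f [fi fA]]; exists f; split.
  by move=> x y /(subsetP s) xS /(subsetP s) yS; apply: fi.
by move=> x /(subsetP s); apply: fA.
Qed.

Lemma cobasis_X (B X : {set T}) : mbasis E ind B -> X \subset E -> #|(E :\: B) :&: X| + #|B :&: X| = #|X|.
Proof.
move=> _ sX; rewrite -(cardsID B X) addnC; congr (_ + _).
  by rewrite setIC.
apply: eq_card => x; rewrite !inE; case xX: (x \in X); rewrite ?andbF ?andbT //=.
by rewrite (subsetP sX x xX) andbT.
Qed.

Lemma card_P (e : T) (X : {set T}) : e \notin X -> #|famA A X :|: famAe A e (e |: X)| = #|famA A X| + #|famAe A e (e |: X)|.
Proof.
move=> eX; rewrite cardsU.
suff -> : famA A X :&: famAe A e (e |: X) = set0 by rewrite cards0 subn0.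
apply/setP => i; rewrite !inE; apply/negP => /andP[s /andP[_ eA]].
by move: eX; rewrite (subsetP s e eA).
Qed.


Lemma del0 (e : T) : del_indep ind e set0.
Proof. by rewrite /del_indep ind0 inE. Qed.

Lemma part1 (e : T) (X : {set T}) : e \in E -> X \subset E :\ e ->
  mrank (del_indep ind e) X + #|famA A X| + (#|famAe A e (e |: X)|).-1 <= #|X|.
Proof.
move=> eE sX.
have sXE : X \subset E := subset_trans sX (subsetDl _ _).
have eX : e \notin X by apply/negP => /(subsetP sX); rewrite !inE eqxx.
have [I [sI /andP[iI _] cI]] := mrank_wit X (del0 e).
have [B bB sIB] := ext_basis iI.
set J := E :\: B.
have := (Hd J).1 (dual_basis bB); rewrite /partial_transversal => -[f [fi fA]].
have cJ := card_cobasis bB.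
have imJ : f @: J = [set: 'I_r].
  apply/eqP; rewrite eqEcard subsetT cardsT card_ord card_in_imset; last exact: fi.
  by rewrite -cJ /=; exact: leqnn.

have pre i : exists2 x, x \in J & f x = i.
  have : i \in f @: J by rewrite imJ inE.
  by case/imsetP => x xJ ->; exists x.
have c1 : #|famA A X| <= #|J :&: X|.
  have : famA A X \subset f @: (J :&: X).
    apply/subsetP => i; rewrite inE => sAX; case: (pre i) => x xJ fx.
    apply/imsetP; exists x => //; rewrite inE xJ (subsetP sAX) //.
    by rewrite -fx; apply: fA.
  by move/subset_leq_card/leq_trans; apply; apply: leq_imset_card.
have c2 : #|famA A X| + #|famAe A e (e |: X)| <= #|J :&: X| + 1.
  rewrite -card_P //.
  have : famA A X :|: famAe A e (e |: X) \subset f @: (J :&: (e |: X)).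
    apply/subsetP => i; rewrite !inE => hi.
    have sAi : A i \subset e |: X.
      case/orP: hi => [s|/andP[s _]] //.
      by apply: (subset_trans s); apply: subsetUr.
    case: (pre i) => x xJ fx.
    apply/imsetP; exists x => //; rewrite inE xJ (subsetP sAi) //.
    by rewrite -fx; apply: fA.
  move/subset_leq_card/leq_trans; apply; apply: (leq_trans (leq_imset_card _ _)).
  have : J :&: (e |: X) \subset e |: (J :&: X).
    by apply/subsetP => x; rewrite !inE => /andP[-> /orP[->|->]]; rewrite ?orbT.
  move/subset_leq_card/leq_trans; apply.
  by rewrite cardsU1; case: (e \notin _) => /=; lia.
have c3 : #|I| + #|J :&: X| <= #|X|.
  rewrite -(cobasis_X bB sXE) addnC leq_add2l.
  by apply: subset_leq_card; rewrite subsetI sIB sI.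
rewrite -cI; lia.
Qed.


Definition matching (S : {set T}) (h : T -> 'I_r) :=
  {in S &, injective h} /\ (forall x, x \in S -> x \in A (h x)).

Definition ehrel (S : {set T}) (h : T -> 'I_r) : rel 'I_r :=
  fun a b => [exists u in S, (u \in A a) && (h u == b)].

Lemma path_mono (e1 e2 : rel 'I_r) x p :
  (forall a b, b \in p -> e1 a b -> e2 a b) -> path e1 x p -> path e2 x p.
Proof.
elim: p x => //= b p IH x H /andP[h1 h2].
rewrite (H _ _ (mem_head _ _) h1) /=; apply: IH => // a c cp; apply: H.
by rewrite inE cp orbT.
Qed.

Lemma aug (S : {set T}) (y : T) p : forall h j, matching S h -> j \notin h @: S ->
  path (ehrel S h) j p -> uniq (j :: p) -> y \in A (last j p) -> y \notin S ->
  partial_transversal A (y |: S).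
Proof.
elim: p => [|i p IH] h j [hi hA] jn pa un yA yS /=.
  exists (fun x => if x == y then j else h x); split.
    move=> x z; rewrite !inE => xin zin.
    case: (eqVneq x y) => [->|xy]; case: (eqVneq z y) => [->|zy] //.
    - have zS : z \in S by move: zin; rewrite (negbTE zy).
      move=> jh; case/negP: jn; apply/imsetP; exists z => //.
    - have xS : x \in S by move: xin; rewrite (negbTE xy).
      move=> jh; case/negP: jn; apply/imsetP; exists x => //.
    - have zS : z \in S by move: zin; rewrite (negbTE zy).
      have xS : x \in S by move: xin; rewrite (negbTE xy).
      by apply: hi.
  move=> x; rewrite inE; case: (eqVneq x y) => [->|xy] //= xS.
  by apply: hA; move: xS; rewrite inE (negbTE xy).
move: pa => /= /andP[/existsP[u /andP[uS /andP[uA /eqP hu]]] pa].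
move: un => /= /andP[jn' un].
have ji : j != i by apply: contraNneq jn' => ->; rewrite mem_head.
have ip : i \notin p by move: un => /= /andP[].
set h1 := fun x => if x == u then j else h x.
apply: (IH h1 i) => //.
- split.
    move=> x z xS zS; rewrite /h1.
    case: (eqVneq x u) => [->|xu]; case: (eqVneq z u) => [->|zu] //.
    + move=> jh; case/negP: jn; apply/imsetP; exists z => //.
    + move=> jh; case/negP: jn; apply/imsetP; exists x => //.
    + by apply: hi.
  move=> x xS; rewrite /h1; case: (eqVneq x u) => [->|xu] //.
  exact: hA.
- apply/imsetP => -[x xS]; rewrite /h1; case: (eqVneq x u) => [_ ij|xu hx].
    by rewrite ij eqxx in ji.
  by case/negP: xu; apply/eqP; apply: hi => //; rewrite hu.
- apply: (path_mono _ pa) => a b bp /existsP[u' /andP[u'S /andP[u'A /eqP hu']]].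
  apply/existsP; exists u'; rewrite u'S u'A /= /h1.
  have : u' != u by apply: contraNneq ip => eu; rewrite -hu -eu hu' bp.
  by move/negbTE => ->; rewrite hu'.
Qed.

Lemma reach_aug (S : {set T}) h j i y : matching S h -> j \notin h @: S ->
  connect (ehrel S h) j i -> y \in A i -> y \notin S -> partial_transversal A (y |: S).
Proof.
move=> mh jn /connectP[p pa ->] yA yS.
move: yA; case: (shortenP pa) => p' pa' un _ yA.
exact: (aug mh jn pa' un yA yS).
Qed.


Section Part2.
Variable e : T.
Variable X : {set T}.
Hypothesis eE : e \in E.
Hypothesis sX : X \subset E :\ e.
Hypothesis flat : forall y, y \in (E :\ e) :\: X ->
  mrank (del_indep ind e) X < mrank (del_indep ind e) (y |: X).

Let sXE : X \subset E := subset_trans sX (subsetDl _ _).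
Let eX : e \notin X.
Proof. by apply/negP => /(subsetP sX); rewrite !inE eqxx. Qed.

Lemma mrank_BX (B : {set T}) : ind B -> #|B :&: X| <= mrank (del_indep ind e) X.
Proof.
move=> iB; apply: mrank_ge; first exact: subsetIr.
rewrite /del_indep (indS (subsetIl _ _) iB) /=.
by apply/negP => /setIP[_ eX']; move: eX; rewrite eX'.
Qed.

Lemma FL (S : {set T}) y : S \subset E :\: X -> partial_transversal A S ->
  y \in E :\: X -> y != e ->
  exists S'' : {set T}, [/\ S'' \subset (E :\: X) :\ y, partial_transversal A S'' & #|S| <= #|S''|].
Proof.
move=> sS pS yY ye.
have [I [sI /andP[iI _] cI]] := mrank_wit X (del0 e).
have yY' : y \in (E :\ e) :\: X by move: yY; rewrite !inE ye => /andP[-> ->].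
have := flat yY'.
have [K [sK /andP[iK _] cK]] := mrank_wit (y |: X) (del0 e).
rewrite -cI -cK => lt.
have [z /setDP[zK zI] iz] := indX iI iK lt.
have zy : z = y.
  move: (subsetP sK z zK); rewrite !inE => /orP[/eqP //|zX].
  have : #|z |: I| <= mrank (del_indep ind e) X.
    apply: mrank_ge; first by apply/subsetP => x; rewrite !inE => /orP[/eqP->//|/(subsetP sI)].
    rewrite /del_indep iz /= !inE negb_or; apply/andP; split.
      by apply: contraNneq eX => ->.
    by apply: contra eX => /(subsetP sI).
  by rewrite cardsU1 zI -cI => h; exfalso; move: h; clear; lia.
subst z.
have [B bB syB] := ext_basis iz.
have [iB _] := andP bB.
have cIB : #|I| <= #|B :&: X|.
  by apply: subset_leq_card; rewrite subsetI sI (subset_trans _ syB) // subsetUr.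
have yB : y \in B by apply: (subsetP syB); rewrite !inE eqxx.
have := (Hd S).2 pS; rewrite /dual_indep => /andP[_ /existsP[BS /andP[bBS dj]]].
have [iBS _] := andP bBS.
have cBS := mrank_BX iBS.
exists ((E :\: B) :\: X); split.
- apply/subsetP => x; rewrite !inE => /andP[xX /andP[xB xE]].
  rewrite xX xE !andbT /=; by apply: contraNneq xB => ->.
- apply: (PT_sub (subsetDl _ _)); apply/(Hd _).1; exact: dual_basis.
- have sS' : S \subset (E :\: BS) :\: X.
    apply/subsetP => x xS; move: (subsetP sS x xS); rewrite !inE => /andP[-> ->].
    rewrite andbT /=; apply/negP => xBS.
    by move: dj; rewrite disjoints_subset => /subsetP/(_ x xS); rewrite inE xBS.
  apply: (leq_trans (subset_leq_card sS')).
  have h1 := cobasis_X bB sXE; have h2 := cobasis_X bBS sXE.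
  have h3 := cardsID X (E :\: B); have h4 := cardsID X (E :\: BS).
  rewrite (card_cobasis bB) in h3; rewrite (card_cobasis bBS) in h4.
  move: h1 h2 h3 h4 cBS cIB cI; clear; lia.
Qed.


Lemma maxS_exists : exists S : {set T}, [/\ S \subset E :\: X, dual_indep E ind S &
   forall S' : {set T}, S' \subset E :\: X -> partial_transversal A S' -> #|S'| <= #|S|].
Proof.
have [B0 bB0 _] := ext_basis ind0.
have h0 : (set0 \subset E :\: X) && dual_indep E ind set0.
  rewrite sub0set /dual_indep sub0set /=; apply/existsP; exists B0.
  by rewrite bB0 /= disjoints_subset sub0set.
case: (@arg_maxnP _ set0 (fun S : {set T} => (S \subset E :\: X) && dual_indep E ind S)
  (fun S => #|S|) h0) => S /andP[sS dS] mx.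
exists S; split => // S' sS' pS'; apply: mx; rewrite sS' /=; exact: (Hd S').2 pS'.
Qed.

Lemma part2_count : exists S : {set T}, [/\ S \subset E :\: X, dual_indep E ind S &
  #|[set i | ~~ (A i \subset e |: X)]| + (famAe A e (e |: X) != set0) <= #|S|].
Proof.
have [S [sS dS mx]] := maxS_exists.
have := (Hd S).1 dS; rewrite /partial_transversal => -[h [hi hA]].
exists S; split => //.
have mh : matching S h by [].
have keyfree : forall j i y, j \notin h @: S -> connect (ehrel S h) j i -> y \in A i ->
    y \in E :\: X -> y \in S.
  move=> j i y jn ji yA yY; apply/negPn/negP => yS.
  have := mx (y |: S); rewrite subUset sub1set yY sS => /(_ isT (reach_aug mh jn ji yA yS)).
  rewrite cardsU1 yS => h1; exfalso; move: h1; clear; lia.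
have key : forall j i y, j \notin h @: S -> connect (ehrel S h) j i -> y \in A i ->
    y \in E :\: X -> y != e -> False.
  move=> j i0 y jn ji0 yA yY ye.
  pose R := [set i | connect (ehrel S h) j i].
  pose U := [set u in E :\: X | [exists i in R, u \in A i]].
  have UR : forall u, u \in U -> (u \in S) /\ (h u \in R).
    move=> u; rewrite inE => /andP[uY /existsP[i /andP[iR uA]]].
    have jiR : connect (ehrel S h) j i by move: iR; rewrite inE.
    have uS : u \in S by apply: (keyfree j i u).
    split => //; rewrite inE; apply: (connect_trans jiR).
    by apply: connect1; apply/existsP; exists u; rewrite uS uA eqxx.
  have yU : y \in U by rewrite inE yY /=; apply/existsP; exists i0; rewrite inE ji0 yA.
  have [S'' [sS'' pS'' cS'']] := FL sS (ex_intro _ h (conj hi hA)) yY ye.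
  move: pS''; rewrite /partial_transversal => -[h'' [h''i h''A]].
  pose W := [set x | h'' x \in R].
  pose D := S'' :\: (W :|: U).
  have Dprop : forall x, x \in D -> [/\ x \in S'', h'' x \notin R & x \notin U].
    move=> x; rewrite /D inE => /andP[]; rewrite inE negb_or => /andP[xW xU] xS.
    by split => //; move: xW; rewrite inE.
  have S''Y : forall x, x \in S'' -> x \in E :\: X /\ x != y.
    by move=> x /(subsetP sS'') /setD1P[xy xY].
  have c1 : #|S'' :&: (W :|: U)| <= #|U :\ y|.
    apply: subset_leq_card; apply/subsetP => x /setIP[xS /setUP[xW|xU]];
      have [xY xy] := S''Y x xS; apply/setD1P; split => //.
    rewrite inE xY /=; apply/existsP; exists (h'' x).
    by move: xW; rewrite inE => ->; rewrite h''A.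
  have c2 : #|U :|: D| <= #|S|.
    apply: mx.
      apply/subsetP => x /setUP[xU|xD].
        by move: xU; rewrite inE => /andP[].
      by have [xS _ _] := Dprop x xD; have [] := S''Y x xS.
    exists (fun x => if x \in U then h x else h'' x); split.
      move=> x z /setUP[xU|xD] /setUP[zU|zD].
      - rewrite xU zU; have [xS _] := UR x xU; have [zS _] := UR z zU.
        by apply: hi.
      - have [_ hR nzU] := Dprop z zD; have [_ hxR] := UR x xU.
        rewrite xU (negbTE nzU) => hxz.
        by move: hR; rewrite -hxz hxR.
      - have [_ hR nxU] := Dprop x xD; have [_ hzR] := UR z zU.
        rewrite zU (negbTE nxU) => hxz.
        by move: hR; rewrite hxz hzR.
      - have [xS _ nxU] := Dprop x xD; have [zS _ nzU] := Dprop z zD.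
        rewrite (negbTE nxU) (negbTE nzU); by apply: h''i.
    move=> x /setUP[xU|xD].
      by rewrite xU; have [xS _] := UR x xU; apply: hA.
    by have [xS _ nxU] := Dprop x xD; rewrite (negbTE nxU); apply: h''A.
  have c3 : #|U :|: D| = #|U| + #|D|.
    rewrite cardsU; suff -> : U :&: D = set0 by rewrite cards0 subn0.
    apply/eqP; rewrite -subset0; apply/subsetP => x /setIP[xU xD].
    by have [_ _ nxU] := Dprop x xD; rewrite xU in nxU.
  have c4 := cardsID (W :|: U) S''.
  have c5 := cardsD1 y U; rewrite yU in c5.
  move: c1 c2 c3 c4 c5 cS''; rewrite -/D; clear; lia.
pose Q := [set i | ~~ (A i \subset e |: X)].
have Qsub : Q \subset h @: S.
  apply/subsetP => i; rewrite inE => /subsetPn[y yA yn]; apply/negPn/negP => jn.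
  apply: (key i i y jn (connect0 _ _) yA).
    rewrite inE (subsetP (HA i) y yA) andbT; apply: contra yn => yX.
    by rewrite inE yX orbT.
  by apply: contra yn => /eqP ->; rewrite setU11.
have extra : famAe A e (e |: X) != set0 -> exists2 i, i \in h @: S & i \notin Q.
  case/set0Pn => k; rewrite inE => /andP[sk ek].
  have kQ : k \notin Q by rewrite inE negbK.
  case: (boolP (k \in h @: S)) => kn; first by exists k.
  have eY : e \in E :\: X by rewrite inE eX eE.
  have eS := keyfree k k e kn (connect0 _ _) ek eY.
  exists (h e); first exact: imset_f.
  rewrite inE negbK; apply/subsetP => z zA; apply/negPn/negP => zn.
  apply: (key k (h e) z kn _ zA).
  - by apply: connect1; apply/existsP; exists e; rewrite eS ek eqxx.
  - rewrite inE (subsetP (HA _) z zA) andbT; apply: contra zn => zX.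
    by rewrite inE zX orbT.
  - by apply: contra zn => /eqP ->; rewrite setU11.
have cS : #|h @: S| = #|S| by apply: card_in_imset.
case: (boolP (famAe A e (e |: X) != set0)) => ne.
  have [i iS iQ] := extra ne.
  have : i |: Q \subset h @: S by rewrite subUset sub1set iS Qsub.
  by move/subset_leq_card; rewrite cardsU1 iQ cS /Q /=; lia.
by rewrite /= addn0 -cS; apply: subset_leq_card.
Qed.


Lemma part2_ge : #|X| <= mrank (del_indep ind e) X + #|famA A X| + (#|famAe A e (e |: X)|).-1.
Proof.
have [S [sS dS cnt]] := part2_count.
move: (dS); rewrite /dual_indep => /andP[_ /existsP[BS /andP[bBS dj]]].
have [iBS _] := andP bBS.
have cBS := mrank_BX iBS.
have sS' : S \subset (E :\: BS) :\: X.
  apply/subsetP => x xS; move: (subsetP sS x xS); rewrite !inE => /andP[-> ->].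
  rewrite andbT /=; apply/negP => xBS.
  by move: dj; rewrite disjoints_subset => /subsetP/(_ x xS); rewrite inE xBS.
have h2 := cobasis_X bBS sXE.
have h4 := cardsID X (E :\: BS); rewrite (card_cobasis bBS) in h4.
have eQ : ~: [set i | ~~ (A i \subset e |: X)] = famA A X :|: famAe A e (e |: X).
  apply/setP => i; rewrite /famA /famAe !inE negbK.
  apply/idP/orP => [s|[s|/andP[s _]]].
  - case eA: (e \in A i); first by right; rewrite s.
    left; apply/subsetP => x xA; move: (subsetP s x xA); rewrite !inE => /orP[/eqP xe|//].
    by move: eA; rewrite -xe xA.
  - exact: subset_trans s (subsetUr _ _).
  - exact: s.
have cQ := cardsC [set i | ~~ (A i \subset e |: X)].
rewrite eQ card_P // card_ord in cQ.
have hb : (#|famAe A e (e |: X)|).-1 + (famAe A e (e |: X) != set0) = #|famAe A e (e |: X)|.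
  by rewrite -cards_eq0; case: (#|famAe A e (e |: X)|) => // n; rewrite /= addn1.
have := subset_leq_card sS'.
move: cnt cBS h2 h4 cQ hb; clear; lia.
Qed.

End Part2.

End Proofs.


Theorem lemma3p2 (T : finType) (E : {set T}) (ind : {set T} -> bool)
  (r : nat) (A : 'I_r -> {set T}) (e : T) (X : {set T}) :
  matroid_axioms E ind ->
  (forall i, A i \subset E) ->
  (forall I, dual_indep E ind I <-> partial_transversal A I) ->
  r = mrank (dual_indep E ind) E ->
  e \in E ->
  X \subset E :\ e ->
  (mrank (del_indep ind e) X + #|famA A X| + (#|famAe A e (e |: X)|).-1 <= #|X|)%N /\
  (cyclic_flat (E :\ e) (del_indep ind e) X ->
   (mrank (del_indep ind e) X + #|famA A X| + (#|famAe A e (e |: X)|).-1 = #|X|)%N).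
Proof.
move=> Hm HA Hd Hr eE sX.
have p1 := part1 Hm Hd Hr eE sX.
split => // -[[_ flat] _].
have p2 := part2_ge Hm HA Hd Hr eE sX flat.
by apply/eqP; rewrite eqn_leq p1 p2.
Qed.
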